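(* Let $(M,g)$ be a hyperkähler K3 surface with complex structures $I,J,K=IJ$ and Kähler forms $\omega_I,\omega_J,\omega_K$. Assume: - $Y=(M,J)$ is an elliptic K3 surface $\pi:Y\to\mathbb P^1$ with a section $\sigma_0$ and fibre class $f$; - the holomorphic two-form of $Y$ is $\sigma_J=\omega_K+i\omega_I$. Let $X=(M,I)$ with $\sigma_I=\omega_J+i\omega_K$. Let $U'\subset\Gamma=H^2(M,\mathbb Z)$ be the hyperbolic plane with basis $v=f$, $v^*=f+[\sigma_0]$, identified with $U$ via $v\mapsto w$, $v^*\mapsto w^*$, and let $\Gamma'=U'^\perp$, so $\Gamma=\Gamma'\oplus U'$. Put $\mathrm{vol}(f)=\langle\omega_J,f\rangle$. Then the $\tilde\xi$-mirror of $(X,\omega_I,B=0)$ is given by $$\tilde\xi(\gamma((P_{\sigma_I},\omega_I),0))=\gamma((P_{\sigma^\vee},\omega^\vee),B^\vee)$$ for some $B^\vee\in\Gamma_{\mathbb R}$, where $$\sigma^\vee=\frac{1}{\mathrm{vol}(f)}\Big(\tfrac{\omega_I^2}{2}f+[\sigma_0]+f+i\omega_I\Big),\qquad \omega^\vee=\frac{1}{\mathrm{vol}(f)}\mathrm{Im}(\sigma_I).$$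
   Context: For a hyperkähler metric, $\omega_\lambda=g(\lambda(\cdot),\cdot)$. The form $\langle\ ,\ \rangle$ on $\Gamma=H^2(M,\mathbb Z)$ is the intersection form, extended complex-bilinearly. $U$ is the hyperbolic plane with standard basis $(w,w^* )$ ($w^2={w^*}^2=0$, $\langle w,w^*\rangle=1$). $P_\sigma$ is the oriented plane spanned by $\mathrm{Re}\,\sigma,\mathrm{Im}\,\sigma$. $\gamma$ sends $((P,\omega),B)$ to $(H_1,H_2)$ with: - $H_1=\{x-\langle x,B\rangle w:x\in P\}$, oriented via $P$; - $H_2$ with ordered basis $\big(\tfrac12(\omega^2-B^2)w+w^*+B,\ \omega-\langle\omega,B\rangle w\big)$. $\xi\in \mathrm O(\Gamma\oplus U)$ is the identity on $\Gamma'$ and swaps $v\leftrightarrow w$, $v^*\leftrightarrow w^*$. $\iota(H_1,H_2)=(H_2,H_1)$, and $\tilde\xi=\iota\circ\xi$. *)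

(* Defs.v *)
From HB Require Import structures.
From mathcomp Require Import all_boot all_order all_algebra.
From mathcomp Require Import reals.
Set Implicit Arguments. Unset Strict Implicit. Unset Printing Implicit Defensive.
Import Order.TTheory GRing.Theory Num.Theory.
Local Open Scope ring_scope.

(* Gamma = H^2(M,Z) is modelled as 'rV[int]_22 with Gram matrix Q : 'M[int]_22
   (the intersection form); Gamma_R = 'rV[R]_22. *)

Definition intv (R : realType) (x : 'rV[int]_22) : 'rV[R]_22 :=
  map_mx (fun z : int => z%:~R) x.
Definition formR (R : realType) (Q : 'M[int]_22) : 'M[R]_22 :=
  map_mx (fun z : int => z%:~R) Q.

Definition bform (R : realType) (Q : 'M[int]_22) (x y : 'rV[R]_22) : R :=
  (x *m formR R Q *m y^T) ord0 ord0.

Definition is_K3_lattice (R : realType) (Q : 'M[int]_22) : Prop :=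
  [/\ Q^T = Q,
      (forall i, (2 %| Q i i)%Z),
      (\det Q = 1 \/ \det Q = -1) &
      exists P : 'M[R]_22, P \in unitmx /\
        P *m formR R Q *m P^T = diag_mx (\row_(i < 22) (if (i < 3)%N then 1 else -1))].

(* (Gamma + U)_R is modelled as 'rV[R]_(22 + 2): Gamma_R embedded in the first
   22 coordinates, U_R = span(w, w^* ) the last two. *)
Definition emb (R : realType) (x : 'rV[R]_22) : 'rV[R]_(22 + 2) := row_mx x 0.
Definition wU (R : realType) : 'rV[R]_(22 + 2) := row_mx 0 (delta_mx ord0 ord0).
Definition wsU (R : realType) : 'rV[R]_(22 + 2) := row_mx 0 (delta_mx ord0 ord_max).

(* An oriented plane is represented by an ordered basis (a pair of vectors). *)
Definition oplane_eq (R : realType) (n : nat) (a b : 'rV[R]_n * 'rV[R]_n) : Prop :=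
  exists m : 'M[R]_2, 0 < \det m /\
    b.1 = m ord0 ord0 *: a.1 + m ord0 ord_max *: a.2 /\
    b.2 = m ord_max ord0 *: a.1 + m ord_max ord_max *: a.2.

Definition pplane_eq (R : realType) (n : nat)
  (H H' : ('rV[R]_n * 'rV[R]_n) * ('rV[R]_n * 'rV[R]_n)) : Prop :=
  oplane_eq H.1 H'.1 /\ oplane_eq H.2 H'.2.

(* A complex class sigma = Re sigma + i Im sigma in Gamma_C is represented by
   the pair (Re sigma, Im sigma); P_sigma is the oriented plane with ordered
   basis (Re sigma, Im sigma). *)
Definition Psig (R : realType) (s : 'rV[R]_22 * 'rV[R]_22) := s.

Definition gamma (R : realType) (Q : 'M[int]_22) (P : 'rV[R]_22 * 'rV[R]_22)
  (om B : 'rV[R]_22) :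
  ('rV[R]_(22 + 2) * 'rV[R]_(22 + 2)) * ('rV[R]_(22 + 2) * 'rV[R]_(22 + 2)) :=
  let h x := emb x - bform Q x B *: wU R in
  ((h P.1, h P.2),
   ((2^-1 * (bform Q om om - bform Q B B)) *: wU R + wsU R + emb B,
    emb om - bform Q om B *: wU R)).

Definition act_pair (R : realType) (xi : 'rV[R]_(22 + 2) -> 'rV[R]_(22 + 2))
  (H : ('rV[R]_(22 + 2) * 'rV[R]_(22 + 2)) * ('rV[R]_(22 + 2) * 'rV[R]_(22 + 2))) :=
  ((xi H.1.1, xi H.1.2), (xi H.2.1, xi H.2.2)).
Definition iota (T : Type) (H : T * T) : T * T := (H.2, H.1).
Definition xi_tilde (R : realType) (xi : 'rV[R]_(22 + 2) -> 'rV[R]_(22 + 2)) H :=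
  iota (act_pair xi H).

(* Main.v *)
Require Import Defs.
From HB Require Import structures.
From mathcomp Require Import all_boot all_order all_algebra.
From mathcomp Require Import reals.
From mathcomp Require Import ring.
Import Order.TTheory GRing.Theory Num.Theory.
Local Open Scope ring_scope.

Lemma bformDl (R : realType) Q (x y z : 'rV[R]_22) : bform Q (x + y) z = bform Q x z + bform Q y z.
Proof. by rewrite /bform !mulmxDl mxE. Qed.
Lemma bformZl (R : realType) Q c (x z : 'rV[R]_22) : bform Q (c *: x) z = c * bform Q x z.
Proof. by rewrite /bform -!scalemxAl mxE. Qed.
Lemma bformC (R : realType) (Q : 'M[int]_22) (x z : 'rV[R]_22) : Q^T = Q -> bform Q x z = bform Q z x.
Proof.
move=> HQ; rewrite /bform.
have H : forall A : 'M[R]_1, A ord0 ord0 = A^T ord0 ord0 by move=> A; rewrite mxE.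
rewrite H.
rewrite !trmx_mul trmxK.
by rewrite /formR map_trmx HQ mulmxA.
Qed.
Lemma intvD (R : realType) (x y : 'rV[int]_22) : intv R (x + y) = intv R x + intv R y.
Proof. by rewrite /intv map_mxD. Qed.
Lemma intvB (R : realType) (x y : 'rV[int]_22) : intv R (x - y) = intv R x - intv R y.
Proof. by rewrite /intv map_mxB. Qed.
Lemma intvZ (R : realType) c (x : 'rV[int]_22) : intv R (c *: x) = c%:~R *: intv R x.
Proof. by rewrite /intv map_mxZ. Qed.
Lemma intv_delta (R : realType) i : intv R (delta_mx 0 i) = delta_mx 0 i.
Proof. by rewrite /intv map_delta_mx. Qed.
Lemma bform_int (R : realType) Q (x y : 'rV[int]_22) :
  bform Q (intv R x) (intv R y) = ((x *m Q *m y^T) 0 0)%:~R.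
Proof. by rewrite /bform /intv /formR map_trmx -!map_mxM mxE. Qed.

Lemma embD (R : realType) (x y : 'rV[R]_22) : emb (x + y) = emb x + emb y.
Proof. by rewrite /emb add_row_mx addr0. Qed.
Lemma embZ (R : realType) c (x : 'rV[R]_22) : emb (c *: x) = c *: emb x.
Proof. by rewrite /emb scale_row_mx scaler0. Qed.
Lemma embB (R : realType) (x y : 'rV[R]_22) : emb (x - y) = emb x - emb y.
Proof. by rewrite embD -scaleN1r embZ scaleN1r. Qed.
Lemma emb_sum (R : realType) (F : 'I_22 -> 'rV[R]_22) : emb (\sum_i F i) = \sum_i emb (F i).
Proof. by apply: (big_morph (@emb R) (@embD R)); rewrite /emb row_mx0. Qed.
Lemma bform_suml (R : realType) Q (F : 'I_22 -> 'rV[R]_22) z :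
  bform Q (\sum_i F i) z = \sum_i bform Q (F i) z.
Proof.
apply: (big_morph (fun x => bform Q x z)) => [x y|]; first exact: bformDl.
by rewrite /bform !mul0mx mxE.
Qed.
Lemma bformBl (R : realType) Q (x y z : 'rV[R]_22) : bform Q (x - y) z = bform Q x z - bform Q y z.
Proof. by rewrite bformDl -scaleN1r bformZl mulN1r. Qed.

Lemma zmodAC (V : zmodType) (E A B P Q : V) : E - A - B + P + Q = E + (P - A) + (Q - B).
Proof. by rewrite !addrA (addrAC _ (- B) P) (addrAC _ (- B) Q) (addrAC E (- A) P). Qed.

Lemma xi_formula (R : realType) (Q : 'M[int]_22) (fZ s0Z : 'rV[int]_22)
  (xi : {linear 'rV[R]_(22 + 2) -> 'rV[R]_(22 + 2)}) :
  Q^T = Q ->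
  let f := intv R fZ in let s0 := intv R s0Z in
  bform Q f f = 0 -> bform Q s0 s0 = -2 -> bform Q f s0 = 1 ->
  let v := f in let vs := f + s0 in
  (forall x : 'rV[int]_22, bform Q (intv R x) v = 0 -> bform Q (intv R x) vs = 0 ->
     xi (emb (intv R x)) = emb (intv R x)) ->
  xi (emb v) = wU R -> xi (emb vs) = wsU R ->
  forall x, xi (emb x) = emb x + bform Q x vs *: (wU R - emb v) + bform Q x v *: (wsU R - emb vs).
Proof.
move=> HQ f s0 Hff Hss Hfs v vs Hxi Hv Hvs.
have Hsf : bform Q s0 f = 1 by rewrite bformC.
have Hvv : bform Q v v = 0 by [].
have Hvvs : bform Q v vs = 1.
  rewrite /vs /v bformC // bformDl. rewrite Hff add0r. exact: Hsf.
have Hvsv : bform Q vs v = 1 by rewrite bformC.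
have Hvsvs : bform Q vs vs = 0.
  rewrite /vs bformDl Hvvs /v bformC // bformDl Hfs Hss.
  by rewrite addrA -(natrD R 1 1) subrr.
have Hvsi : vs = intv R (fZ + s0Z) by rewrite intvD.
have Hvi : v = intv R fZ by [].
clearbody v vs.
have Hint : forall e : 'rV[int]_22, xi (emb (intv R e)) =
   emb (intv R e) + bform Q (intv R e) vs *: (wU R - emb v) + bform Q (intv R e) v *: (wsU R - emb vs).
  move=> e.
  set c := bform Q (intv R e) vs; set d := bform Q (intv R e) v.
  pose e' := e - ((e *m Q *m (fZ + s0Z)^T) 0 0) *: fZ - ((e *m Q *m fZ^T) 0 0) *: (fZ + s0Z).
  have He' : intv R e' = intv R e - c *: v - d *: vs.
    rewrite /e' !intvB !intvZ /c /d Hvsi Hvi !bform_int //.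
  have Ho1 : bform Q (intv R e') v = 0.
    by rewrite He' !bformBl !bformZl Hvv Hvsv -/d mulr0 subr0 mulr1 subrr.
  have Ho2 : bform Q (intv R e') vs = 0.
    by rewrite He' !bformBl !bformZl Hvvs Hvsvs -/c mulr0 subr0 mulr1 subrr.
  have Hdec : intv R e = intv R e' + c *: v + d *: vs.
    by rewrite He' addrAC subrK subrK.
  rewrite {1}Hdec !embD !embZ !linearD !linearZ /= Hxi // Hv Hvs He' !embB !embZ.
  by rewrite !scalerN zmodAC.
move=> x.
rewrite [x in LHS]row_sum_delta [x in RHS]row_sum_delta.
under eq_bigr do rewrite -(intv_delta R).
rewrite emb_sum linear_sum /=.
under eq_bigr do rewrite embZ linearZ /= Hint.
have Hs : forall z, bform Q (\sum_(i < 22) x 0 i *: intv R (delta_mx 0 i)) z =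
   \sum_(i < 22) x 0 i * bform Q (intv R (delta_mx 0 i)) z.
  by move=> z; rewrite bform_suml; apply: eq_bigr => i _; rewrite bformZl.
rewrite !Hs.
rewrite !scaler_suml -!big_split /=.
apply: eq_bigr => i _.
by rewrite embZ !scalerDr !scalerA.
Qed.

Lemma bformx0 (R : realType) Q (x : 'rV[R]_22) : bform Q x 0 = 0.
Proof. by rewrite /bform trmx0 mulmx0 mxE. Qed.
Lemma emb0 (R : realType) : emb (0 : 'rV[R]_22) = 0.
Proof. by rewrite /emb row_mx0. Qed.
Lemma bformDr (R : realType) (Q : 'M[int]_22) (x y z : 'rV[R]_22) : Q^T = Q -> bform Q z (x + y) = bform Q z x + bform Q z y.
Proof. by move=> HQ; rewrite !(@bformC R Q z _ HQ) bformDl. Qed.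
Lemma bformBr (R : realType) (Q : 'M[int]_22) (x y z : 'rV[R]_22) : Q^T = Q -> bform Q z (x - y) = bform Q z x - bform Q z y.
Proof. by move=> HQ; rewrite !(@bformC R Q z _ HQ) bformBl. Qed.
Lemma bformZr (R : realType) (Q : 'M[int]_22) c (x z : 'rV[R]_22) : Q^T = Q -> bform Q z (c *: x) = c * bform Q z x.
Proof. by move=> HQ; rewrite !(@bformC R Q z _ HQ) bformZl. Qed.

Lemma bformNl (R : realType) Q (x z : 'rV[R]_22) : bform Q (- x) z = - bform Q x z.
Proof. by rewrite -scaleN1r bformZl mulN1r. Qed.
Lemma bformNr (R : realType) (Q : 'M[int]_22) (x z : 'rV[R]_22) : Q^T = Q -> bform Q z (- x) = - bform Q z x.
Proof. by move=> HQ; rewrite -scaleN1r bformZr // mulN1r. Qed.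
Theorem mainTheorem19 (R : realType) (Q : 'M[int]_22)
  (omI omJ omK : 'rV[R]_22) (fZ s0Z : 'rV[int]_22)
  (xi : {linear 'rV[R]_(22 + 2) -> 'rV[R]_(22 + 2)}) :
  is_K3_lattice R Q ->
  (* cohomology classes of the hyperkaehler Kaehler forms omega_I, omega_J, omega_K *)
  0 < bform Q omI omI ->
  bform Q omJ omJ = bform Q omI omI -> bform Q omK omK = bform Q omI omI ->
  bform Q omI omJ = 0 -> bform Q omJ omK = 0 -> bform Q omK omI = 0 ->
  let f := intv R fZ in let s0 := intv R s0Z in
  (* fibre class f and section class [sigma_0] of the elliptic K3 Y = (M,J) *)
  bform Q f f = 0 -> bform Q s0 s0 = -2 -> bform Q f s0 = 1 ->
  (* f, [sigma_0] are algebraic on Y: orthogonal to sigma_J = omega_K + i omega_I *)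
  bform Q f omK = 0 -> bform Q f omI = 0 ->
  bform Q s0 omK = 0 -> bform Q s0 omI = 0 ->
  (* vol(f) = <omega_J, f> > 0 (f effective, omega_J Kaehler on Y) *)
  0 < bform Q omJ f ->
  let v := f in let vs := f + s0 in
  (* xi is the identity on Gamma' = U'^perp and swaps v <-> w, v^* <-> w^* *)
  (forall x : 'rV[int]_22, bform Q (intv R x) v = 0 -> bform Q (intv R x) vs = 0 ->
     xi (emb (intv R x)) = emb (intv R x)) ->
  xi (emb v) = wU R -> xi (emb vs) = wsU R ->
  xi (wU R) = emb v -> xi (wsU R) = emb vs ->
  let vol := bform Q omJ f in
  let sigI := (omJ, omK) in
  let sigv := (vol^-1 *: ((2^-1 * bform Q omI omI) *: f + s0 + f), vol^-1 *: omI) in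
  let omv := vol^-1 *: sigI.2 in
  exists Bv : 'rV[R]_22,
    pplane_eq (xi_tilde xi (gamma Q (Psig sigI) omI 0)) (gamma Q (Psig sigv) omv Bv).
Proof.
move=> [HQ _ _ _] HI HJ HK HIJ HJK HKI f s0 Hff Hss Hfs HfK HfI HsK HsI Hvol v vs Hxi Hv Hvs Hw Hws vol sigI sigv omv.
have XF := @xi_formula R Q fZ s0Z xi HQ Hff Hss Hfs Hxi Hv Hvs.
set c := bform Q omJ s0.
exists (vol^-1 *: omJ - (2 + c / vol) *: f - s0).
rewrite /xi_tilde /iota /act_pair /gamma /Psig /=.
rewrite !bformx0 !scale0r !subr0 emb0 addr0 !linearD !linearZ /= Hw Hws !XF.
rewrite /omv /sigI /=.
have HIf : bform Q omI f = 0 by rewrite bformC.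
have HKf : bform Q omK f = 0 by rewrite bformC.
have HIs : bform Q omI s0 = 0 by rewrite bformC.
have HKs : bform Q omK s0 = 0 by rewrite bformC.
have HJI : bform Q omJ omI = 0 by rewrite bformC.
have HKJ : bform Q omK omJ = 0 by rewrite bformC.
have HIK : bform Q omI omK = 0 by rewrite bformC.
have Hfj : bform Q f omJ = vol by rewrite bformC.
have Hsj : bform Q s0 omJ = c by rewrite bformC.
have Hsf : bform Q s0 f = 1 by rewrite bformC.
rewrite !scalerN.
have bDr := fun x y z => @bformDr R Q x y z HQ.
have bBr := fun x y z => @bformBr R Q x y z HQ.
have bZr := fun a x z => @bformZr R Q a x z HQ.
have bNr := fun x z => @bformNr R Q x z HQ.
rewrite ?(bformDl, bformBl, bformZl, bformNl, bDr, bBr, bZr, bNr).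
rewrite ?(HIf, HKf, HIs, HKs, HJI, HKJ, HIK, Hfj, Hsj, Hsf, Hff, Hss, Hfs, HfK, HfI, HsK, HsI, HIJ, HJK, HKI, HJ, HK).
rewrite -/vol -/c.
have Hv0 : vol != 0 by rewrite gt_eqF.
set n := bform Q omI omI.
rewrite /v /vs /f /s0.
rewrite /pplane_eq /Defs.iota /=.
have Hdet : 0 < \det ((vol^-1)%:M : 'M[R]_2) by rewrite det_scalar exprn_gt0 // invr_gt0.
split; exists (vol^-1)%:M; (split; first exact: Hdet); split; apply/rowP => j;
  rewrite /emb /wU /wsU !mxE /=.
all: case: splitP => k _; rewrite !mxE /= ?mulr1n ?mulr0n.
all: by field.
Qed.
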